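(* The variety $\mathsf{V}(S_{(4,414)})$ is the ai-semiring variety defined by the identities $xy\approx yx$, $x_1x_2x_3\approx x_1x_2x_3+x_4$, $x_1x_2+x_3x_4\approx x_1x_2+x_3x_4+x_1x_4$.
   Context: An ai-semiring is an algebra $(S,+,\cdot)$ with $(S,+)$ a semilattice, $(S,\cdot)$ a semigroup, and both distributive laws. $\mathsf{V}(S)$ is the variety generated by $S$; ''the ai-semiring variety defined by identities $\Sigma$'' is the class of all ai-semirings satisfying $\Sigma$. $S_{(4,414)}$ has carrier $\{1,2,3,4\}$; addition: $x+x=x$, $2+x=x$, $1+x=1$ for all $x$, $3+4=1$; multiplication (row $a$, column $b$ gives $a\cdot b$): row $1$: $1,1,1,1$; row $2$: $1,3,1,3$; row $3$: $1,1,1,1$; row $4$: $1,3,1,3$. *)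

(* Defs.v *)
Inductive term : Type :=
| Var : nat -> term
| Add : term -> term -> term
| Mul : term -> term -> term.

Record aiSemiring : Type := AiSemiring {
  car : Type;
  sadd : car -> car -> car;
  smul : car -> car -> car;
  sadd_assoc : forall x y z, sadd x (sadd y z) = sadd (sadd x y) z;
  sadd_comm : forall x y, sadd x y = sadd y x;
  sadd_idem : forall x, sadd x x = x;
  smul_assoc : forall x y z, smul x (smul y z) = smul (smul x y) z;
  smul_distl : forall x y z, smul x (sadd y z) = sadd (smul x y) (smul x z);
  smul_distr : forall x y z, smul (sadd x y) z = sadd (smul x z) (smul y z)
}.

Fixpoint eval (A : aiSemiring) (v : nat -> car A) (t : term) : car A :=
  match t with
  | Var n => v n
  | Add s u => sadd A (eval A v s) (eval A v u)
  | Mul s u => smul A (eval A v s) (eval A v u)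
  end.

Definition satisfies (A : aiSemiring) (s t : term) : Prop :=
  forall v : nat -> car A, eval A v s = eval A v t.

Inductive E4 : Type := e1 | e2 | e3 | e4.

Definition add4 (x y : E4) : E4 :=
  match x, y with
  | e1, _ => e1
  | _, e1 => e1
  | e2, z => z
  | z, e2 => z
  | e3, e3 => e3
  | e4, e4 => e4
  | e3, e4 => e1
  | e4, e3 => e1
  end.

Definition mul4 (x y : E4) : E4 :=
  match x, y with
  | e2, e2 => e3
  | e2, e4 => e3
  | e4, e2 => e3
  | e4, e4 => e3
  | _, _ => e1
  end.

Definition S4_414 : aiSemiring.
Proof.
  refine (@AiSemiring E4 add4 mul4 _ _ _ _ _ _);
  intros; repeat match goal with x : E4 |- _ => destruct x; clear x end; reflexivity.
Defined.

(* Membership in the variety V(S) generated by S: A satisfies every identity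
   satisfied by S (equivalently, by Birkhoff's HSP theorem, A ∈ HSP(S)). *)
Definition in_variety_gen (S A : aiSemiring) : Prop :=
  forall s t : term, satisfies S s t -> satisfies A s t.

Definition x (n : nat) : term := Var n.

Definition satisfies_Sigma (A : aiSemiring) : Prop :=
  satisfies A (Mul (x 0) (x 1)) (Mul (x 1) (x 0)) /\
  satisfies A (Mul (Mul (x 1) (x 2)) (x 3))
              (Add (Mul (Mul (x 1) (x 2)) (x 3)) (x 4)) /\
  satisfies A (Add (Mul (x 1) (x 2)) (Mul (x 3) (x 4)))
              (Add (Add (Mul (x 1) (x 2)) (Mul (x 3) (x 4))) (Mul (x 1) (x 4))).

(* Main.v *)
Require Import Defs.
From Stdlib Require Import Bool Arith.

Fixpoint lin (t : term) : bool :=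
  match t with Var _ => true | Add a b => lin a && lin b | Mul _ _ => false end.
Fixpoint big (t : term) : bool :=
  match t with Var _ => false | Add a b => big a || big b
  | Mul a b => negb (lin a && lin b) end.
Fixpoint inL (t : term) (n : nat) : bool :=
  match t with Var m => Nat.eqb m n | Add a b => inL a n || inL b n | Mul _ _ => false end.
Fixpoint inQ (t : term) (n : nat) : bool :=
  match t with Var _ => false | Add a b => inQ a n || inQ b n
  | Mul a b => inL a n || inL b n end.

Definition le (A : aiSemiring) (a b : car A) := sadd A a b = b.

Lemma le_refl A a : le A a a.
Proof. apply sadd_idem. Qed.
Lemma le_trans A a b c : le A a b -> le A b c -> le A a c.
Proof. unfold le; intros H1 H2. rewrite <- H2, sadd_assoc, H1. reflexivity. Qed.
Lemma le_addl A a b : le A a (sadd A a b).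
Proof. unfold le. rewrite sadd_assoc, sadd_idem. reflexivity. Qed.
Lemma le_addr A a b : le A b (sadd A a b).
Proof. rewrite sadd_comm. apply le_addl. Qed.
Lemma le_lub A a b c : le A a c -> le A b c -> le A (sadd A a b) c.
Proof. unfold le; intros H1 H2. rewrite <- sadd_assoc, H2, H1. reflexivity. Qed.
Lemma le_mull A a b c : le A a b -> le A (smul A c a) (smul A c b).
Proof. unfold le; intros H. rewrite <- smul_distl, H. reflexivity. Qed.
Lemma le_mulr A a b c : le A a b -> le A (smul A a c) (smul A b c).
Proof. unfold le; intros H. rewrite <- smul_distr, H. reflexivity. Qed.
Lemma le_antisym A a b : le A a b -> le A b a -> a = b.
Proof. unfold le; intros H1 H2. rewrite <- H1. rewrite sadd_comm. symmetry. exact H2. Qed.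

Lemma L_le A v t n : inL t n = true -> le A (v n) (eval A v t).
Proof.
  induction t; simpl; intros H.
  - apply Nat.eqb_eq in H; subst; apply le_refl.
  - apply orb_true_iff in H; destruct H as [H|H].
    + eapply le_trans; [apply IHt1, H| apply le_addl].
    + eapply le_trans; [apply IHt2, H| apply le_addr].
  - discriminate.
Qed.

Lemma nonlin_prod A v t : lin t = false ->
  exists p q, le A (smul A p q) (eval A v t).
Proof.
  induction t; simpl; intros H.
  - discriminate.
  - apply andb_false_iff in H; destruct H as [H|H].
    + destruct (IHt1 H) as [p [q Hp]]. exists p, q. eapply le_trans; [apply Hp|apply le_addl].
    + destruct (IHt2 H) as [p [q Hp]]. exists p, q. eapply le_trans; [apply Hp|apply le_addr].
  - exists (eval A v t1), (eval A v t2). apply le_refl.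
Qed.

Lemma big_top A v (H2 : forall p q r z, le A z (smul A (smul A p q) r)) t :
  big t = true -> forall z, le A z (eval A v t).
Proof.
  induction t; simpl; intros H z.
  - discriminate.
  - apply orb_true_iff in H; destruct H as [H|H].
    + eapply le_trans; [apply IHt1, H| apply le_addl].
    + eapply le_trans; [apply IHt2, H| apply le_addr].
  - apply negb_true_iff, andb_false_iff in H; destruct H as [H|H].
    + destruct (nonlin_prod A v t1 H) as [p [q Hp]].
      eapply le_trans; [apply (H2 p q (eval A v t2))|]. apply le_mulr, Hp.
    + destruct (nonlin_prod A v t2 H) as [p [q Hp]].
      eapply le_trans; [apply (H2 (eval A v t1) p q)|]. rewrite <- smul_assoc.
      apply le_mull, Hp.
Qed.

Lemma Qwit A v (Hc : forall p q, smul A p q = smul A q p) t x :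
  inQ t x = true -> exists a, le A (smul A (v x) a) (eval A v t).
Proof.
  induction t; simpl; intros H.
  - discriminate.
  - apply orb_true_iff in H; destruct H as [H|H].
    + destruct (IHt1 H) as [a Ha]; exists a; eapply le_trans; [apply Ha|apply le_addl].
    + destruct (IHt2 H) as [a Ha]; exists a; eapply le_trans; [apply Ha|apply le_addr].
  - apply orb_true_iff in H; destruct H as [H|H].
    + exists (eval A v t2). apply le_mulr, L_le, H.
    + exists (eval A v t1). rewrite Hc. apply le_mull, L_le, H.
Qed.

Lemma key A v (Hc : forall p q, smul A p q = smul A q p)
  (H3 : forall a b c d, sadd A (smul A a b) (smul A c d) =
        sadd A (sadd A (smul A a b) (smul A c d)) (smul A a d)) t x y :
  inQ t x = true -> inQ t y = true -> le A (smul A (v x) (v y)) (eval A v t).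
Proof.
  intros Hx Hy.
  destruct (Qwit A v Hc t x Hx) as [a Ha].
  destruct (Qwit A v Hc t y Hy) as [b Hb].
  eapply le_trans with (sadd A (smul A (v x) a) (smul A b (v y))).
  - unfold le. rewrite sadd_comm. symmetry. apply H3.
  - apply le_lub; [exact Ha|]. rewrite Hc; exact Hb.
Qed.

Lemma mul_lin A v (Hc : forall p q, smul A p q = smul A q p)
  (H3 : forall a b c d, sadd A (smul A a b) (smul A c d) =
        sadd A (sadd A (smul A a b) (smul A c d)) (smul A a d)) t s1 :
  lin s1 = true -> (forall n, inL s1 n = true -> inQ t n = true) ->
  forall s2, lin s2 = true -> (forall n, inL s2 n = true -> inQ t n = true) ->
  le A (smul A (eval A v s1) (eval A v s2)) (eval A v t).
Proof.
  induction s1; simpl; intros Hl1 Hi1 s2 Hl2 Hi2.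
  - induction s2; simpl in *.
    + apply key; auto. apply Hi1, Nat.eqb_refl. apply Hi2, Nat.eqb_refl.
    + apply andb_true_iff in Hl2; destruct Hl2.
      rewrite smul_distl. apply le_lub.
      * apply IHs2_1; auto. intros m Hm; apply Hi2; rewrite Hm; reflexivity.
      * apply IHs2_2; auto. intros m Hm; apply Hi2; rewrite Hm, orb_true_r; reflexivity.
    + discriminate.
  - apply andb_true_iff in Hl1; destruct Hl1.
    rewrite smul_distr. apply le_lub.
    + apply IHs1_1; auto. intros m Hm; apply Hi1; rewrite Hm; reflexivity.
    + apply IHs1_2; auto. intros m Hm; apply Hi1; rewrite Hm, orb_true_r; reflexivity.
  - discriminate.
Qed.

Lemma le_inv A v (Hc : forall p q, smul A p q = smul A q p)
  (H3 : forall a b c d, sadd A (smul A a b) (smul A c d) =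
        sadd A (sadd A (smul A a b) (smul A c d)) (smul A a d)) t s :
  big s = false -> (forall n, inL s n = true -> inL t n = true) ->
  (forall n, inQ s n = true -> inQ t n = true) -> le A (eval A v s) (eval A v t).
Proof.
  induction s; simpl; intros Hb HL HQ.
  - apply L_le, HL, Nat.eqb_refl.
  - apply orb_false_iff in Hb; destruct Hb.
    apply le_lub.
    + apply IHs1; auto; intros m Hm; [apply HL|apply HQ]; rewrite Hm; reflexivity.
    + apply IHs2; auto; intros m Hm; [apply HL|apply HQ]; rewrite Hm, orb_true_r; reflexivity.
  - apply negb_false_iff, andb_true_iff in Hb; destruct Hb.
    apply mul_lin; auto; intros m Hm; apply HQ; rewrite Hm; [reflexivity|apply orb_true_r].
Qed.

Definition vz (a : E4) (z : nat) : nat -> car S4_414 :=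
  fun n => if Nat.eqb n z then a else e2.

Lemma S_lin2 t : lin t = true -> eval S4_414 (fun _ => e2) t = e2.
Proof.
  induction t; simpl; intros H; auto.
  apply andb_true_iff in H; destruct H as [H1 H2].
  rewrite IHt1, IHt2 by auto; reflexivity. discriminate.
Qed.

Lemma S_1 t : big t = false ->
  eval S4_414 (fun _ => e2) t = e2 \/ eval S4_414 (fun _ => e2) t = e3.
Proof.
  induction t; simpl; intros H; auto.
  - apply orb_false_iff in H; destruct H as [H1 H2].
    destruct (IHt1 H1) as [-> | ->]; destruct (IHt2 H2) as [-> | ->]; simpl; auto.
  - apply negb_false_iff, andb_true_iff in H; destruct H.
    rewrite !S_lin2 by auto. simpl; auto.
Qed.

Lemma S_lin4 z t : lin t = true ->
  eval S4_414 (vz e4 z) t = e2 \/ eval S4_414 (vz e4 z) t = e4.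
Proof.
  induction t; simpl; intros H.
  - unfold vz; destruct (Nat.eqb n z); auto.
  - apply andb_true_iff in H; destruct H as [H1 H2].
    destruct (IHt1 H1) as [-> | ->]; destruct (IHt2 H2) as [-> | ->]; simpl; auto.
  - discriminate.
Qed.

Lemma S_2 z t : big t = false ->
  (inL t z = true -> eval S4_414 (vz e4 z) t = e1 \/ eval S4_414 (vz e4 z) t = e4) /\
  (inL t z = false -> eval S4_414 (vz e4 z) t = e2 \/ eval S4_414 (vz e4 z) t = e3).
Proof.
  induction t; simpl; intros H.
  - unfold vz; rewrite (Nat.eqb_sym n z); destruct (Nat.eqb z n); split; intros; auto; discriminate.
  - apply orb_false_iff in H; destruct H as [H1 H2].
    destruct (IHt1 H1) as [A1 B1]; destruct (IHt2 H2) as [A2 B2].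
    destruct (inL t1 z), (inL t2 z); simpl; split; intros Hx; try discriminate;
    first [destruct (A1 eq_refl) as [-> | ->] | destruct (B1 eq_refl) as [-> | ->]];
    first [destruct (A2 eq_refl) as [-> | ->] | destruct (B2 eq_refl) as [-> | ->]];
    simpl; auto.
  - apply negb_false_iff, andb_true_iff in H; destruct H.
    split; intros; [discriminate|].
    destruct (S_lin4 z t1) as [-> | ->]; auto; destruct (S_lin4 z t2) as [-> | ->]; auto.
Qed.

Lemma S_lin3 z t : lin t = true ->
  (inL t z = true -> eval S4_414 (vz e3 z) t = e3) /\
  (inL t z = false -> eval S4_414 (vz e3 z) t = e2).
Proof.
  induction t; simpl; intros H.
  - unfold vz; rewrite (Nat.eqb_sym n z); destruct (Nat.eqb z n); split; intros; auto; discriminate.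
  - apply andb_true_iff in H; destruct H as [H1 H2].
    destruct (IHt1 H1) as [A1 B1]; destruct (IHt2 H2) as [A2 B2].
    destruct (inL t1 z), (inL t2 z); simpl; split; intros Hx; try discriminate;
    first [rewrite (A1 eq_refl) | rewrite (B1 eq_refl)];
    first [rewrite (A2 eq_refl) | rewrite (B2 eq_refl)]; reflexivity.
  - discriminate.
Qed.

Lemma S_3 z t : big t = false ->
  (inQ t z = true -> eval S4_414 (vz e3 z) t = e1) /\
  (inQ t z = false -> eval S4_414 (vz e3 z) t = e2 \/ eval S4_414 (vz e3 z) t = e3).
Proof.
  induction t; simpl; intros H.
  - unfold vz; split; intros; [discriminate|]. destruct (Nat.eqb n z); auto.
  - apply orb_false_iff in H; destruct H as [H1 H2].
    destruct (IHt1 H1) as [A1 B1]; destruct (IHt2 H2) as [A2 B2].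
    destruct (inQ t1 z), (inQ t2 z); simpl; split; intros Hx; try discriminate;
    first [rewrite (A1 eq_refl) | destruct (B1 eq_refl) as [-> | ->]];
    first [rewrite (A2 eq_refl) | destruct (B2 eq_refl) as [-> | ->]];
    simpl; auto; destruct (eval S4_414 (vz e3 z) t1); reflexivity.
  - apply negb_false_iff, andb_true_iff in H; destruct H as [H1 H2].
    destruct (S_lin3 z t1 H1) as [A1 B1]; destruct (S_lin3 z t2 H2) as [A2 B2].
    destruct (inL t1 z), (inL t2 z); simpl; split; intros Hx; try discriminate;
    first [rewrite (A1 eq_refl) | rewrite (B1 eq_refl)];
    first [rewrite (A2 eq_refl) | rewrite (B2 eq_refl)]; simpl; auto.
Qed.

Lemma S_top p q r z : le S4_414 z (smul S4_414 (smul S4_414 p q) r).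
Proof. destruct p, q, r, z; reflexivity. Qed.

Lemma S_big t v : big t = true -> eval S4_414 v t = e1.
Proof.
  intros H. pose proof (big_top S4_414 v S_top t H e1) as H'. unfold le in H'.
  rewrite <- H'. reflexivity.
Qed.

Theorem proposition5p5 :
  forall A : aiSemiring, in_variety_gen S4_414 A <-> satisfies_Sigma A.
Proof.
  intros A; split.
  - intros H. unfold satisfies_Sigma; split; [|split]; apply H; intros v; simpl;
    destruct (v 0), (v 1), (v 2), (v 3), (v 4); reflexivity.
  - intros [H1 [H2 H3]] s t HS v.
    assert (Hc : forall p q, smul A p q = smul A q p).
    { intros p q. exact (H1 (fun n => match n with 0 => p | _ => q end)). }
    assert (Ht : forall p q r z, le A z (smul A (smul A p q) r)).
    { intros p q r z. pose proof (H2 (fun n => match n with 1 => p | 2 => q | 3 => r | _ => z end)) as E.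
      simpl in E. unfold le. rewrite sadd_comm. symmetry. exact E. }
    assert (H3' : forall a b c d, sadd A (smul A a b) (smul A c d) =
        sadd A (sadd A (smul A a b) (smul A c d)) (smul A a d)).
    { intros a b c d. exact (H3 (fun n => match n with 1 => a | 2 => b | 3 => c | _ => d end)). }
    destruct (big s) eqn:Bs, (big t) eqn:Bt.
    + apply le_antisym; apply big_top; auto.
    + exfalso. pose proof (HS (fun _ => e2)) as E. rewrite (S_big s _ Bs) in E.
      destruct (S_1 t Bt) as [E'|E']; rewrite E' in E; discriminate.
    + exfalso. pose proof (HS (fun _ => e2)) as E. rewrite (S_big t _ Bt) in E.
      destruct (S_1 s Bs) as [E'|E']; rewrite E' in E; discriminate.
    + assert (HL : forall n, inL s n = inL t n).
      { intros n. pose proof (HS (vz e4 n)) as E.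
        destruct (S_2 n s Bs) as [As Bs'], (S_2 n t Bt) as [At Bt'].
        destruct (inL s n), (inL t n); auto; exfalso.
        - destruct (As eq_refl) as [E1|E1]; destruct (Bt' eq_refl) as [E2|E2];
          rewrite E1, E2 in E; discriminate.
        - destruct (Bs' eq_refl) as [E1|E1]; destruct (At eq_refl) as [E2|E2];
          rewrite E1, E2 in E; discriminate. }
      assert (HQ : forall n, inQ s n = inQ t n).
      { intros n. pose proof (HS (vz e3 n)) as E.
        destruct (S_3 n s Bs) as [As Bs'], (S_3 n t Bt) as [At Bt'].
        destruct (inQ s n), (inQ t n); auto; exfalso.
        - rewrite (As eq_refl) in E. destruct (Bt' eq_refl) as [E2|E2];
          rewrite E2 in E; discriminate.
        - rewrite (At eq_refl) in E. destruct (Bs' eq_refl) as [E2|E2];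
          rewrite E2 in E; discriminate. }
      apply le_antisym; apply le_inv; auto; intros n Hn;
      first [rewrite HL in *|rewrite HQ in *|rewrite <- HL|rewrite <- HQ]; auto.
Qed.
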